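(* For $(c,d)\in\mathbb{C}\times\mathbb{C}^*$ let $f_{c,d}(z) = 1 + \frac cz + \frac d{z^2}$, with critical points $0$ and $-2d/c$ ($=\infty$ when $c=0$), and identify $(c,d)$ with $[c:d:1]\in\mathbb{CP}^2$. For $j\ge 1$ let $\mathcal{P}_j = \{(c,d)\in\mathbb{C}\times\mathbb{C}^* : f_{c,d}^j(0) = -2d/c\}$ and $\mathcal{Q}_j = \{(c,d)\in\mathbb{C}\times\mathbb{C}^* : f_{c,d}^j(-2d/c) = 0\}$, with closures $\overline{\mathcal{P}_j}$, $\overline{\mathcal{Q}_j}$ in $\mathbb{CP}^2$. If $[c:0:1]\in\overline{\mathcal{P}_j}\cup\overline{\mathcal{Q}_j}$, then either $c=0$, or there are integers $q\ge 3$ and $p$ with $\gcd(p,q)=1$ such that $c^{-1} = -4\cos^2(\pi p/q)$. *)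

(* Defs.v *)
From HB Require Import structures.
From mathcomp Require Import all_boot all_order all_algebra.
From mathcomp Require Import all_classical all_reals all_analysis.
From mathcomp Require Export complex.
Import Order.TTheory GRing.Theory Num.Theory.
Import numFieldTopology.Exports numFieldNormedType.Exports.

Set Implicit Arguments.
Unset Strict Implicit.
Unset Printing Implicit Defensive.

Local Open Scope ring_scope.
Local Open Scope classical_set_scope.

(* The complex numbers R[i] (R : realType) carry their usual metric topology,
   the one induced by the modulus (same as the generic numFieldType topology). *)
HB.instance Definition _ (R : rcfType) := PseudoPointedMetric.copy R[i] (R[i])^o.

(* The Riemann sphere  C ∪ {∞}:  Some z = z,  None = ∞. *)
Definition sphere (R : rcfType) := option R[i].

Definition fcd (R : rcfType) (c d : R[i]) (z : sphere R) : sphere R :=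
  match z with
  | None => Some 1
  | Some w => if w == 0 then None else Some (1 + c / w + d / w ^+ 2)
  end.

Definition crit2 (R : rcfType) (c d : R[i]) : sphere R :=
  if c == 0 then None else Some (- (2 * d) / c).

Definition Pset (R : rcfType) (j : nat) : set (R[i] * R[i]) :=
  [set cd | cd.2 != 0 /\ iter j (fcd cd.1 cd.2) (Some 0) = crit2 cd.1 cd.2].

Definition Qset (R : rcfType) (j : nat) : set (R[i] * R[i]) :=
  [set cd | cd.2 != 0 /\ iter j (fcd cd.1 cd.2) (crit2 cd.1 cd.2) = Some 0].

Arguments Pset R j : clear implicits.
Arguments Qset R j : clear implicits.

(* Main.v *)
Set Warnings "-all".
Require Import Defs.
From HB Require Import structures.
From mathcomp Require Import all_boot all_order all_algebra.
From mathcomp Require Import all_classical all_reals all_analysis.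
From mathcomp Require Import complex.
From mathcomp Require Import ring lra.
Import Order.TTheory GRing.Theory Num.Theory.
Import numFieldTopology.Exports numFieldNormedType.Exports.
Set Implicit Arguments.
Unset Strict Implicit.
Unset Printing Implicit Defensive.
Local Open Scope ring_scope.
Local Open Scope classical_set_scope.
Definition Fh (R : rcfType) (c d : R[i]) (v : R[i] * R[i]) : R[i] * R[i] :=
  (v.1 ^+ 2 + c * v.1 * v.2 + d * v.2 ^+ 2, v.1 ^+ 2).

Definition proj (R : rcfType) (v : R[i] * R[i]) : sphere R :=
  if v.2 == 0 then None else Some (v.1 / v.2).

Lemma fcd_proj (R : rcfType) (c d : R[i]) (v : R[i] * R[i]) :
  d != 0 -> v != (0, 0) ->
  fcd c d (proj v) = proj (Fh c d v) /\ Fh c d v != (0, 0).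
Proof.
case: v => a b /= d0 v0; rewrite /proj /Fh /=.
move: v0; have [->|b0] := eqVneq b 0 => v0.
  have a0 : a != 0 by apply/eqP => a0; move: v0; rewrite a0 eqxx.
  rewrite /= sqrf_eq0 (negPf a0) mulr0 expr0n /= mulr0 !addr0 divff ?sqrf_eq0 //.
  split => //; apply/negP => /eqP [] /eqP; by rewrite sqrf_eq0 (negPf a0).
move: v0; have [->|a0] := eqVneq a 0 => v0.
  rewrite mul0r /= eqxx expr0n /= eqxx; split => //.
  rewrite mulr0 mul0r !add0r.
  apply/negP => /eqP [] /eqP; by rewrite mulf_eq0 sqrf_eq0 (negPf d0) (negPf b0).
rewrite /= mulf_eq0 invr_eq0 (negPf a0) (negPf b0) /= sqrf_eq0 (negPf a0); split; last first.
  apply/negP => /eqP [] _ /eqP; by rewrite sqrf_eq0 (negPf a0).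
congr Some; field; rewrite a0 b0 //.
Qed.

Lemma iter_proj (R : rcfType) (c d : R[i]) (v : R[i] * R[i]) n :
  d != 0 -> v != (0, 0) ->
  iter n (fcd c d) (proj v) = proj (iter n (Fh c d) v) /\ iter n (Fh c d) v != (0, 0).
Proof.
move=> d0 v0; elim: n => [//|n [IH1 IH2]].
rewrite !iterS IH1; exact: fcd_proj.
Qed.

Lemma proj_eq (R : rcfType) (u v : R[i] * R[i]) :
  u != (0, 0) -> v != (0, 0) -> proj u = proj v -> u.1 * v.2 = u.2 * v.1.
Proof.
case: u => a b; case: v => a' b' /= u0 v0; rewrite /proj /=.
have [->|b0] := eqVneq b 0; have [->|b0'] := eqVneq b' 0 => //=.
- by rewrite !mulr0 mul0r.
- move=> [] e.
  have : a / b * (b * b') = a' / b' * (b * b') by rewrite e.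
  rewrite mulrA divfK // [b * b']mulrC mulrA divfK // => ->; ring.
Qed.

Definition Mm (R : rcfType) (c : R[i]) (v : R[i] * R[i]) : R[i] * R[i] :=
  (v.1 + c * v.2, v.1).

Lemma Fh0_iter (R : rcfType) (c : R[i]) (v : R[i] * R[i]) n :
  (forall k, (k < n)%N -> (iter k (Mm c) v).1 != 0) ->
  exists l : R[i], l != 0 /\
    iter n (Fh c 0) v = (l * (iter n (Mm c) v).1, l * (iter n (Mm c) v).2).
Proof.
elim: n => [_|n IH H]; first by exists 1; rewrite oner_eq0 !mul1r; case: v.
have [l [l0 e]] : exists l : R[i], l != 0 /\
    iter n (Fh c 0) v = (l * (iter n (Mm c) v).1, l * (iter n (Mm c) v).2).
  by apply: IH => k kn; apply: H; apply: ltnW.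
have w0 := H n (ltnSn n).
exists (l ^+ 2 * (iter n (Mm c) v).1); split.
  by rewrite mulf_eq0 negb_or sqrf_eq0 l0.
rewrite !iterS e /Fh /Mm /=; congr pair; ring.
Qed.

Lemma Fh0_zero (R : rcfType) (c : R[i]) (v : R[i] * R[i]) n :
  (iter n (Fh c 0) v).1 = 0 -> exists k, (iter k (Mm c) v).1 = 0.
Proof.
move=> h.
have [[k hk]|nk] := pselect (exists k, (iter k (Mm c) v).1 = 0); first by exists k.
have H : forall k, (k < n)%N -> (iter k (Mm c) v).1 != 0.
  by move=> k _; apply/eqP => hk; apply: nk; exists k.
have [l [l0 e]] := Fh0_iter H.
exfalso; apply: nk; exists n.
by move: h; rewrite e /= => /eqP; rewrite mulf_eq0 (negPf l0) => /eqP.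
Qed.

Lemma Mm_scale (R : rcfType) (c x : R[i]) (a b : R[i]) k :
  iter k (Mm c) (x * a, x * b) =
  (x * (iter k (Mm c) (a, b)).1, x * (iter k (Mm c) (a, b)).2).
Proof.
elim: k => [//|k IH]; rewrite !iterS IH /Mm /=; congr pair; ring.
Qed.

Lemma contM (R : realType) (f g : R[i] * R[i] -> R[i]) :
  continuous f -> continuous g -> continuous (fun x => f x * g x).
Proof. move=> cf cg x; exact: (@continuousM R[i] (R[i] * R[i])%type f g x (cf x) (cg x)). Qed.

Lemma contD (R : realType) (f g : R[i] * R[i] -> R[i]) :
  continuous f -> continuous g -> continuous (fun x => f x + g x).
Proof. move=> cf cg x; exact: (@continuousD R[i] R[i]^o (R[i] * R[i])%type f g x (cf x) (cg x)). Qed.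

Lemma contB (R : realType) (f g : R[i] * R[i] -> R[i]) :
  continuous f -> continuous g -> continuous (fun x => f x - g x).
Proof. move=> cf cg x; exact: (@continuousB R[i] R[i]^o (R[i] * R[i])%type f g x (cf x) (cg x)). Qed.

Lemma contfst (R : realType) : continuous (fun x : R[i] * R[i] => x.1).
Proof. move=> x; exact: cvg_fst. Qed.

Lemma contsnd (R : realType) : continuous (fun x : R[i] * R[i] => x.2).
Proof. move=> x; exact: cvg_snd. Qed.

Lemma contcst (R : realType) (a : R[i]) : continuous (fun x : R[i] * R[i] => a).
Proof. move=> x; exact: cvg_cst. Qed.

Lemma contX2 (R : realType) (f : R[i] * R[i] -> R[i]) :
  continuous f -> continuous (fun x => f x ^+ 2).
Proof.
move=> cf; have -> : (fun x => f x ^+ 2) = (fun x => f x * f x).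
  by apply: funext => x; rewrite expr2.
exact: contM.
Qed.

Lemma cont_Fh1 (R : realType) (u v : R[i] * R[i] -> R[i]) :
  continuous u -> continuous v ->
  continuous (fun p : R[i] * R[i] => (u p ^+ 2 + p.1 * u p * v p) + p.2 * v p ^+ 2).
Proof.
move=> cu cv.
have h1 : continuous (fun p : R[i] * R[i] => u p ^+ 2) by exact: contX2.
have h2 : continuous (fun p : R[i] * R[i] => p.1 * u p) by exact: (contM (@contfst R) cu).
have h3 : continuous (fun p : R[i] * R[i] => p.1 * u p * v p) by exact: (contM h2 cv).
have h4 : continuous (fun p : R[i] * R[i] => u p ^+ 2 + p.1 * u p * v p) by exact: (contD h1 h3).
have h5 : continuous (fun p : R[i] * R[i] => v p ^+ 2) by exact: contX2.
have h6 : continuous (fun p : R[i] * R[i] => p.2 * v p ^+ 2) by exact: (contM (@contsnd R) h5).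
exact: (contD h4 h6).
Qed.

Lemma cont_iter (R : realType) (g : R[i] * R[i] -> R[i] * R[i]) n :
  continuous (fun p => (g p).1) -> continuous (fun p => (g p).2) ->
  continuous (fun p => (iter n (Fh p.1 p.2) (g p)).1) /\
  continuous (fun p => (iter n (Fh p.1 p.2) (g p)).2).
Proof.
move=> c1 c2; elim: n => [|n [IH1 IH2]].
  have -> : (fun p : R[i] * R[i] => (iter 0 (Fh p.1 p.2) (g p)).1) = (fun p => (g p).1) by [].
  have -> : (fun p : R[i] * R[i] => (iter 0 (Fh p.1 p.2) (g p)).2) = (fun p => (g p).2) by [].
  exact: (conj c1 c2).
have e1 : (fun p : R[i] * R[i] => (iter n.+1 (Fh p.1 p.2) (g p)).1) =
  (fun p => ((iter n (Fh p.1 p.2) (g p)).1 ^+ 2 + p.1 * (iter n (Fh p.1 p.2) (g p)).1 * (iter n (Fh p.1 p.2) (g p)).2) + p.2 * (iter n (Fh p.1 p.2) (g p)).2 ^+ 2).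
  by apply: funext => p; rewrite iterS.
have e2 : (fun p : R[i] * R[i] => (iter n.+1 (Fh p.1 p.2) (g p)).2) =
  (fun p => (iter n (Fh p.1 p.2) (g p)).1 ^+ 2).
  by apply: funext => p; rewrite iterS.
rewrite e1 e2.
exact: (conj (cont_Fh1 IH1 IH2) (contX2 IH1)).
Qed.

Lemma closure_zero (R : realType) (f : R[i] * R[i] -> R[i]) (A : set (R[i] * R[i])) x :
  continuous f -> (forall y, A y -> f y = 0) -> closure A x -> f x = 0.
Proof.
move=> cf hA cx.
have cl : closed (f @^-1` [set 0]).
  move/continuous_closedP: cf; apply; apply: accessible_closed_set1.
  apply: hausdorff_accessible; exact: (@norm_hausdorff R[i] R[i]^o).
have sub : A `<=` f @^-1` [set 0] by move=> y /hA.
have := closureS sub cx.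
by rewrite -(proj1 (closure_id _) cl).
Qed.

Lemma crit2_proj (R : rcfType) (c d : R[i]) : crit2 c d = proj (- (2 * d), c).
Proof. by rewrite /crit2 /proj /=; case: eqP. Qed.

Lemma four_neq0 (R : rcfType) : (4 : R[i]) != 0.
Proof. by rewrite pnatr_eq0. Qed.

Lemma fcd_crit2 (R : rcfType) (c d : R[i]) : d != 0 ->
  fcd c d (crit2 c d) = proj (4 * d - c ^+ 2, 4 * d).
Proof.
move=> d0; have h4 := four_neq0 R.
rewrite /crit2 /proj /= mulf_eq0 (negPf h4) (negPf d0) /=.
have [->|c0] := eqVneq c 0.
  by rewrite /= expr0n /= subr0 divff // mulf_eq0 negb_or h4.
rewrite /= mulf_eq0 invr_eq0 (negPf c0) orbF oppr_eq0 mulf_eq0 (negPf d0) orbF.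
rewrite pnatr_eq0 /=; congr Some; field.
by rewrite c0 d0.
Qed.

Definition psiP (R : rcfType) (j : nat) (p : R[i] * R[i]) : R[i] :=
  (iter j.-1 (Fh p.1 p.2) (1, 0)).1 * p.1 - (iter j.-1 (Fh p.1 p.2) (1, 0)).2 * (- (2 * p.2)).

Definition psiQ (R : rcfType) (j : nat) (p : R[i] * R[i]) : R[i] :=
  (iter j.-1 (Fh p.1 p.2) (4 * p.2 - p.1 ^+ 2, 4 * p.2)).1.

Lemma P_psi (R : rcfType) j p : (1 <= j)%N -> Pset R j p -> psiP j p = 0.
Proof.
case: j => // j _; case: p => c d [/= d0]; rewrite -iterS iterSr.
have -> : fcd c d (Some 0) = proj (1, 0) by rewrite /proj /= eqxx.
rewrite crit2_proj.
have nz : (1, 0) != (0, 0) :> R[i] * R[i] by apply/eqP => -[] /eqP; rewrite oner_eq0.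
have [-> h2] := iter_proj c j d0 nz.
have nz2 : (- (2 * d), c) != (0, 0).
  apply/eqP => -[] /eqP; rewrite oppr_eq0 mulf_eq0 (negPf d0) pnatr_eq0 //.
move/(proj_eq h2 nz2) => /= e; rewrite /psiP /= e subrr //.
Qed.

Lemma Q_psi (R : rcfType) j p : (1 <= j)%N -> Qset R j p -> psiQ j p = 0.
Proof.
case: j => // j _; case: p => c d [/= d0]; rewrite -iterS iterSr fcd_crit2 //.
have nz : (4 * d - c ^+ 2, 4 * d) != (0, 0).
  apply/eqP => -[] _ /eqP; rewrite mulf_eq0 (negPf d0) orbF; exact/negP/four_neq0.
have [-> h2] := iter_proj c j d0 nz.
have -> : Some 0 = proj (0, 1 : R[i]) by rewrite /proj /= oner_eq0 divr1.
have nz2 : (0, 1) != (0, 0) :> R[i] * R[i] by apply/eqP => -[] /eqP; rewrite oner_eq0.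
by move/(proj_eq h2 nz2) => /=; rewrite mulr1 mulr0.
Qed.

Lemma reduce (R : realType) j (c : R[i]) : (1 <= j)%N ->
  closure (Pset R j `|` Qset R j) (c, 0) ->
  c = 0 \/ exists k, (iter k (Mm c) (1, 0)).1 = 0.
Proof.
move=> j1 cl.
have [c1 c2] := @cont_iter R (fun _ => (1, 0)) j.-1 (@contcst R _) (@contcst R _).
have cP : continuous (psiP j : R[i] * R[i] -> R[i]).
  have h1 : continuous (fun p : R[i] * R[i] => (iter j.-1 (Fh p.1 p.2) (1, 0)).1 * p.1).
    exact: (contM c1 (@contfst R)).
  have h2 : continuous (fun p : R[i] * R[i] => 2 * p.2) by exact: (contM (@contcst R _) (@contsnd R)).
  have h3 : continuous (fun p : R[i] * R[i] => 0 - 2 * p.2) by exact: (contB (@contcst R _) h2).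
  have h4 : continuous (fun p : R[i] * R[i] => (iter j.-1 (Fh p.1 p.2) (1, 0)).2 * (0 - 2 * p.2)).
    exact: (contM c2 h3).
  have := contB h1 h4.
  have -> : (fun p : R[i] * R[i] => (iter j.-1 (Fh p.1 p.2) (1, 0)).1 * p.1 - (iter j.-1 (Fh p.1 p.2) (1, 0)).2 * (0 - 2 * p.2)) = psiP j.
    by apply: funext => p; rewrite /psiP sub0r.
  by [].
have cQ : continuous (psiQ j : R[i] * R[i] -> R[i]).
  have g1 : continuous (fun p : R[i] * R[i] => 4 * p.2) by exact: (contM (@contcst R _) (@contsnd R)).
  have g2 : continuous (fun p : R[i] * R[i] => p.1 ^+ 2) by exact: (contX2 (@contfst R)).
  have g3 : continuous (fun p : R[i] * R[i] => 4 * p.2 - p.1 ^+ 2) by exact: (contB g1 g2).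
  have [d1 _] := @cont_iter R (fun p => (4 * p.2 - p.1 ^+ 2, 4 * p.2)) j.-1 g3 g1.
  exact: d1.
have cont : continuous (fun p : R[i] * R[i] => psiP j p * psiQ j p) by exact: (contM cP cQ).
have hz : psiP j (c, 0) * psiQ j (c, 0) = 0.
  apply: (closure_zero cont _ cl) => y [/(P_psi j1) ->|/(Q_psi j1) ->]; ring.
move/eqP: hz; rewrite mulf_eq0 => /orP [] /eqP.
  rewrite /psiP /= mulr0 oppr0 mulr0 subr0 => /eqP; rewrite mulf_eq0 => /orP [] /eqP.
    by move/Fh0_zero => ?; right.
  by left.
rewrite /psiQ /= mulr0 sub0r.
have -> : ((- c ^+ 2), 0) = ((- c ^+ 2) * 1, (- c ^+ 2) * 0) by rewrite mulr1 mulr0.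
move/Fh0_zero => [k]; rewrite Mm_scale /= => /eqP; rewrite mulf_eq0 oppr_eq0 sqrf_eq0.
by case/orP => /eqP h; [left|right; exists k].
Qed.

Lemma sin_cos_pi_nat (R : realType) (n : nat) :
  sin (pi * n%:R) = 0 :> R /\ cos (pi * n%:R) = (-1) ^+ n :> R.
Proof.
elim: n => [|n [IHs IHc]]; first by rewrite mulr0 sin0 cos0 expr0.
rewrite -addn1 natrD mulrDr mulr1 sinDpi cosDpi IHs IHc oppr0 exprD expr1.
by split => //; rewrite mulrN1.
Qed.

Lemma sin_cos_pi_int (R : realType) (n : int) :
  sin (pi * n%:~R) = 0 :> R /\ cos (pi * n%:~R) = (-1) ^+ `|n|%N :> R.
Proof.
case: n => m; first exact: sin_cos_pi_nat.
rewrite NegzE intrN mulrN sinN cosN abszN absz_nat.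
have [-> ->] := sin_cos_pi_nat R m.+1; by rewrite oppr0.
Qed.

Lemma cos_period_int (R : realType) (x : R) (k : int) :
  cos (x + pi *+ 2 * k%:~R) = cos x.
Proof.
have [hs hc] := sin_cos_pi_int R (k * 2).
have -> : pi *+ 2 * k%:~R = pi * (k * 2)%:~R :> R by rewrite intrM; ring.
rewrite cosD hs hc abszM /= -signr_odd oddM andbF expr0 mulr0 subr0 mulr1 //.
Qed.

Lemma cos_eq1_int (R : realType) (t : R) : cos t = 1 ->
  exists k : int, t = pi *+ 2 * k%:~R.
Proof.
move=> ht.
have T0 : 0 < pi *+ 2 :> R by rewrite pmulrn_rgt0 // pi_gt0.
set k := Num.floor (t / (pi *+ 2)).
have /andP [hk1 hk2] : k%:~R <= t / (pi *+ 2) < (k + 1)%:~R.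
  by rewrite -real_floor_eq ?num_real.
set r := t - pi *+ 2 * k%:~R.
have r0 : 0 <= r.
  by rewrite subr_ge0 mulrC -ler_pdivlMr.
have rT : r < pi *+ 2.
  move: hk2; rewrite ltr_pdivrMr // intrD mulrDl mulrC => h.
  rewrite ltrBlDl; apply: (lt_le_trans h); rewrite lerD2l /=; by rewrite mul1r.
have cr : cos r = 1.
  by rewrite /r -mulrN -intrN cos_period_int.
suff e0 : r = 0 by exists k; apply/eqP; rewrite -subr_eq0 -/r e0.
have [rpi|pir] := lerP r pi.
  apply: (@cos_inj R); rewrite ?in_itv /= ?r0 ?rpi ?lexx ?pi_ge0 //.
  by rewrite cr cos0.
exfalso.
have e : cos (pi *+ 2 - r) = 1.
  by rewrite addrC cosD2pi cosN.
have h0 : pi *+ 2 - r = 0.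
  apply: (@cos_inj R); rewrite ?in_itv /= ?lexx ?pi_ge0 //; last by rewrite e cos0.
  rewrite subr_ge0 (ltW rT) /=; lra.
by move: rT; rewrite -subr_gt0 h0 ltxx.
Qed.

Lemma demoivre (R : realType) (t : R) n :
  ((cos t +i* sin t) ^+ n = cos (t *+ n) +i* sin (t *+ n))%C.
Proof.
elim: n => [|n IH]; first by rewrite expr0 mulr0n cos0 sin0.
rewrite exprS IH mulrS cosD sinD.
apply/eqP; rewrite eq_complex /=; apply/andP; split; apply/eqP; ring.
Qed.

Lemma root_unity (R : realType) (w : R[i]) m : (0 < m)%N -> w ^+ m = 1 ->
  exists k : int, w + 2 + w^-1 = ((4 * cos (pi * k%:~R / m%:R) ^+ 2)%:C)%C.
Proof.
move=> m0 hw.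
have hn : `|w| = 1.
  have := congr1 (fun x : R[i] => `|x|) hw; rewrite /=; rewrite normrX normr1 => /eqP.
  by rewrite pexpr_eq1 // => /eqP.
have hww : w * w^*%C = 1 by rewrite -sqr_normc hn expr1n.
have w0 : w != 0 by apply/eqP => w0; move: hww; rewrite w0 mul0r => /eqP; rewrite eq_sym oner_eq0.
have winv : w^-1 = w^*%C.
  by rewrite -[w^-1]mulr1 -hww mulrA mulVf // mul1r.
case: w hw hn hww w0 winv => a b hw hn hww w0 winv.
have hab : a ^+ 2 + b ^+ 2 = 1.
  have := add_Re2_Im2 (a +i* b)%C; rewrite hn expr1n /= => h.
  by have := congr1 (@complex.Re R) h.
have ha : -1 <= a <= 1 by apply/andP; split; nra.
pose t := if 0 <= b then acos a else - acos a.
have ct : cos t = a.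
  by rewrite /t; case: ifP => _; rewrite ?cosN acosK // in_itv /=.
have st : sin t = b.
  rewrite /t; case: ifPn => hb; rewrite ?sinN sin_acos // -hab addrAC subrr add0r sqrtr_sqr.
    by rewrite ger0_norm.
  by rewrite ltr0_norm ?opprK // ltNge.
have hw' := hw; rewrite -ct -st demoivre in hw'.
have c1 : cos (t *+ m) = 1 by have := congr1 (@complex.Re R) hw'.
have [k hk] := cos_eq1_int c1.
exists k.
have m0' : (m%:R : R) != 0 by rewrite pnatr_eq0 -lt0n.
have etk : t = (pi * k%:~R / m%:R) *+ 2.
  apply: (mulIf m0'); rewrite [in LHS]mulr_natr hk; field; exact: m0'.
have ea : a = cos (pi * k%:~R / m%:R) ^+ 2 *+ 2 - 1 by rewrite -ct etk cos_mulr2n.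
rewrite winv addrAC addcJ /=.
apply/eqP; rewrite eq_complex /=; apply/andP; split; apply/eqP.
  rewrite ea; ring.
ring.
Qed.

Lemma lucas (R : rcfType) (c s al be : R[i]) n :
  al ^+ 2 = al + c -> be ^+ 2 = be + c -> al - be = s ->
  s * (iter n (Mm c) (1, 0)).1 = al ^+ n.+1 - be ^+ n.+1 /\
  s * (iter n (Mm c) (1, 0)).2 = al ^+ n - be ^+ n.
Proof.
move=> ha hb hs; elim: n => [|n [IH1 IH2]].
  by rewrite /= expr1 expr0 mulr1 mulr0 hs subrr.
rewrite iterS /Mm /=; split; last exact: IH1.
have e1 : al ^+ n.+2 = al ^+ n.+1 + c * al ^+ n.
  by rewrite !exprS mulrA -expr2 ha; ring.
have e2 : be ^+ n.+2 = be ^+ n.+1 + c * be ^+ n.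
  by rewrite !exprS mulrA -expr2 hb; ring.
rewrite e1 e2 mulrDr IH1 mulrCA IH2; ring.
Qed.

Lemma lucas_deg (R : rcfType) (c : R[i]) n : 4 * c = -1 ->
  2 ^+ n * (iter n (Mm c) (1, 0)).1 = n.+1%:R /\
  2 ^+ n * (iter n (Mm c) (1, 0)).2 = n%:R *+ 2.
Proof.
move=> hc; elim: n => [|n [IH1 IH2]]; first by split; rewrite /= expr0 mul1r ?mul0rn.
rewrite iterS /Mm /=; split; last by rewrite exprS -mulrA IH1 mulr_natl.
have -> : 2 ^+ n.+1 * ((iter n (Mm c) (1, 0)).1 + c * (iter n (Mm c) (1, 0)).2)
  = 2 * (2 ^+ n * (iter n (Mm c) (1, 0)).1) + (4 * c) * (2 ^+ n * (iter n (Mm c) (1, 0)).2) / 2.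
  rewrite exprS; field; rewrite ?pnatr_eq0 //.
rewrite IH1 IH2 hc !mulrS ?mulr0n; field; rewrite ?pnatr_eq0 //.
Qed.

Lemma reduce_frac (R : realType) (k : int) (m : nat) : (0 < m)%N ->
  exists (p : int) (q : nat), (0 < q)%N /\ coprimez p q%:Z /\
    pi * k%:~R / m%:R = pi * p%:~R / q%:R :> R.
Proof.
move=> m0.
set g := gcdn `|k|%N m.
have g0 : (0 < g)%N by rewrite gcdn_gt0 m0 orbT.
have hdvd : (g%:Z %| k)%Z by rewrite dvdzE absz_nat dvdn_gcdl.
set p := (k %/ g%:Z)%Z.
have kp : k = p * g%:Z by rewrite divzK.
set q := (m %/ g)%N.
have mq : m = (q * g)%N by rewrite divnK // dvdn_gcdr.
have q0 : (0 < q)%N by move: m0; rewrite mq muln_gt0 => /andP [].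
exists p, q; split => //; split.
  rewrite coprimezE absz_nat /coprime.
  have ka : `|k|%N = (`|p| * g)%N by rewrite {1}kp abszM absz_nat.
  have : g = (gcdn `|p|%N q * g)%N by rewrite muln_gcdl -ka -mq.
  move/eqP; rewrite -{1}[g]mul1n eqn_pmul2r // => /eqP <-.
  by [].
have gR : (g%:R : R) != 0 by rewrite pnatr_eq0 -lt0n.
have qR : (q%:R : R) != 0 by rewrite pnatr_eq0 -lt0n.
rewrite {1}kp {1}mq intrM natrM.
have -> : ((g%:Z)%:~R : R) = g%:R by [].
by field; rewrite gR qR.
Qed.

Lemma helper_ab (R : rcfType) (a b : R[i]) : a != 0 -> b != 0 ->
  a / b + 2 + (a / b)^-1 = (a + b) ^+ 2 / (a * b).
Proof. by move=> a0 b0; rewrite invf_div; field; rewrite a0 b0. Qed.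

Lemma final (R : realType) (c : R[i]) k : c != 0 -> (iter k (Mm c) (1, 0)).1 = 0 ->
  exists (p : int) (q : nat), (3 <= q)%N /\ coprimez p q%:Z /\
    c^-1 = ((- 4 * cos (pi * p%:~R / q%:R) ^+ 2)%:C)%C.
Proof.
move=> c0 hk.
set s := sqrtC (1 + 4 * c).
have hs : s ^+ 2 = 1 + 4 * c by exact: sqrtCK.
have n2 : (2 : R[i]) != 0 by rewrite pnatr_eq0.
have n4 : (4 : R[i]) != 0 by rewrite pnatr_eq0.
have [s0|s0] := eqVneq s 0.
  have hc : 4 * c = -1.
    have : 1 + 4 * c = 0 by rewrite -hs s0 expr0n.
    by move/eqP; rewrite addrC addr_eq0 => /eqP.
  have [h1 _] := lucas_deg k hc.
  by move: h1; rewrite hk mulr0 => /eqP; rewrite eq_sym pnatr_eq0.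
set al := (1 + s) / 2; set be := (1 - s) / 2.
have ha : al ^+ 2 = al + c.
  apply/eqP; rewrite -subr_eq0.
  have -> : al ^+ 2 - (al + c) = (s ^+ 2 - (1 + 4 * c)) / 4.
    by rewrite /al; field; rewrite ?n2 ?n4.
  by rewrite hs subrr mul0r.
have hb : be ^+ 2 = be + c.
  apply/eqP; rewrite -subr_eq0.
  have -> : be ^+ 2 - (be + c) = (s ^+ 2 - (1 + 4 * c)) / 4.
    by rewrite /be; field; rewrite ?n2 ?n4.
  by rewrite hs subrr mul0r.
have hab : al - be = s by rewrite /al /be; field; rewrite ?n2.
have hsum : al + be = 1 by rewrite /al /be; field; rewrite ?n2.
have [l1 _] := lucas k ha hb hab.
move: l1; rewrite hk mulr0 => /eqP; rewrite eq_sym subr_eq0 => /eqP l1.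
have albe : al * be = - c.
  have -> : al * be = (1 - s ^+ 2) / 4 by rewrite /al /be; field; rewrite ?n2 ?n4.
  by rewrite hs; field; rewrite ?n4.
have be0 : be != 0.
  by apply/eqP => b0; move: albe; rewrite b0 mulr0 => /eqP; rewrite eq_sym oppr_eq0 (negPf c0).
have al0 : al != 0.
  by apply/eqP => a0; move: albe; rewrite a0 mul0r => /eqP; rewrite eq_sym oppr_eq0 (negPf c0).
set w := al / be.
have hw : w ^+ k.+1 = 1 by rewrite /w exprMn exprVn l1 divff // expf_neq0.
have [kk hkk] := root_unity (ltn0Sn k) hw.
have hci : c^-1 = - (w + 2 + w^-1).
  have -> : w + 2 + w^-1 = (al + be) ^+ 2 / (al * be).
    by rewrite /w; apply: helper_ab.
  by rewrite hsum expr1n albe mul1r invrN opprK.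
rewrite hkk in hci.
have [p [q [q0 [cop eqr]]]] := @reduce_frac R kk k.+1 (ltn0Sn k).
rewrite eqr in hci.
have hci' : c^-1 = ((- 4 * cos (pi * p%:~R / q%:R) ^+ 2)%:C)%C by rewrite mulNr rmorphN.
exists p, q; split => //.
case: q q0 cop hci' {hci eqr} => [|[|[|q]]] // _ cop hci'.
- exfalso; move: hci'.
  have [_ hcp] := sin_cos_pi_int R p.
  rewrite mulr1n divr1 hcp -exprM mulnC exprM sqrrN !expr1n mulr1 rmorphN rmorph_nat => hci'.
  have h : c * (-4) = 1 by rewrite -hci' mulfV.
  have hc : 4 * c = -1 by apply: oppr_inj; rewrite opprK -mulNr mulrC h.
  move: hs; rewrite hc subrr => /eqP; rewrite sqrf_eq0 (negPf s0) //.
- exfalso; move: hci'.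
  move: cop; rewrite coprimezE absz_nat coprimen2 => cop.
  have e2 : (pi * p%:~R / 2%:R) *+ 2 = pi * p%:~R :> R.
    by rewrite -mulr_natr; field; rewrite ?pnatr_eq0.
  have := cos_mulr2n (pi * p%:~R / 2%:R : R); rewrite e2.
  have [_ ->] := sin_cos_pi_int R p.
  rewrite -signr_odd cop expr1 => /eqP; rewrite eq_sym subr_eq addNr mulrn_eq0 /= => /eqP ->.
  rewrite mulr0 rmorph0 => /eqP; rewrite invr_eq0 (negPf c0) //.
Qed.

Theorem lemma3p4 (R : realType) (j : nat) (c : R[i]) :
  (1 <= j)%N ->
  closure (Pset R j `|` Qset R j) (c, 0) ->
  c = 0 \/
  exists (p : int) (q : nat), (3 <= q)%N /\ coprimez p q%:Z /\
    c^-1 = ((- 4 * cos (pi * p%:~R / q%:R) ^+ 2)%:C)%C.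
Proof.
move=> j1 cl.
have [->|[k hk]] := reduce j1 cl; first by left.
have [->|c0] := eqVneq c 0; first by left.
by right; exact: final c0 hk.
Qed.
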